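(* The factor complexities $\mathsf{p}_{\mathbf{t}_{3/2}}$ and $\mathsf{p}_{\Delta(\mathbf{t}_{3/2})}$ are both in $\Theta(n^r)$ with $r=\frac{\log 3}{\log(3/2)}$; that is, for each of these two functions $\mathsf{p}$ there exist constants $C_1,C_2>0$ with $C_1n^r\le\mathsf{p}(n)\le C_2n^r$ for all $n\ge1$.
   Context: The Thue--Morse word in base $3/2$ is the unique binary sequence $\mathbf{t}_{3/2}=(t_n)_{n\ge0}$ with $t_0=0$, $t_{3n}=t_{3n+1}=t_{2n}$ and $t_{3n+2}=1-t_{2n+1}$ for all $n\ge0$ (equivalently, $t_n$ is the digit sum modulo $2$ of the base-$3/2$ expansion of $n$, where $\langle 0\rangle$ is empty and $\langle n\rangle=\langle m\rangle d$ for $2n=3m+d$, $d\in\{0,1,2\}$). For a binary sequence $\mathbf{x}=(x_n)$, $\Delta(\mathbf{x})=(x_{n+1}-x_n\bmod 2)_{n\ge0}$, and $\mathsf{p}_{\mathbf{x}}(n)$ is the number of distinct length-$n$ factors of $\mathbf{x}$. *)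

(* Defs.v *)
From mathcomp Require Import all_boot.
From mathcomp Require Import boolp.
From Stdlib Require Import Reals.

Set Implicit Arguments.
Unset Strict Implicit.
Unset Printing Implicit Defensive.

(* Digit sum of the base-3/2 expansion: <0> is empty, <n> = <m> d where
   2n = 3m + d, d in {0,1,2}.  Since m < n for n >= 1, fuel n suffices. *)
Fixpoint dsum32_fuel (fuel n : nat) : nat :=
  match fuel with
  | 0 => 0
  | S f => if n == 0 then 0 else (n.*2 %% 3) + dsum32_fuel f (n.*2 %/ 3)
  end.

Definition dsum32 (n : nat) : nat := dsum32_fuel n n.

Definition thue_morse32 (n : nat) : bool := odd (dsum32 n).

Definition diff_seq (x : nat -> bool) (n : nat) : bool := x n.+1 (+) x n.

Definition is_factor (x : nat -> bool) (n : nat) (w : n.-tuple bool) : Prop :=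
  exists i : nat, forall j : 'I_n, tnth w j = x (i + j).

Definition factor_complexity (x : nat -> bool) (n : nat) : nat :=
  #|[set w : n.-tuple bool | `[< is_factor x w >] ]|.

Definition Theta_pow (p : nat -> nat) (r : R) : Prop :=
  exists C1 C2 : R, (0 < C1)%R /\ (0 < C2)%R /\
    forall n : nat, (1 <= n)%N ->
      (C1 * Rpower (INR n) r <= INR (p n))%R /\
      (INR (p n) <= C2 * Rpower (INR n) r)%R.

(* Main.v *)
Require Import Defs.
From mathcomp Require Import all_boot.
From mathcomp Require Import boolp.
From mathcomp Require Import zify.
From Stdlib Require Import Reals.
From Stdlib Require Import Lra.
Import ssrnat.

Lemma mod_half Q m m' : odd Q -> 2*m = 2*m' %[mod Q] -> m = m' %[mod Q].
Proof.
move=> oQ h.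
have key x : x %% Q = (((Q.+1) %/ 2) * ((2*x) %% Q)) %% Q.
  rewrite modnMmr mulnA.
  have -> : Q.+1 %/ 2 * 2 = 1 + Q.
    have := modn2 Q; rewrite oQ => h2; lia.
  by rewrite mulnDl mul1n addnC mulnC modnMDl.
by rewrite key h -key.
Qed.

Definition fac (x : nat -> bool) n i : n.-tuple bool := [tuple x (i + val p) | p < n].
Definition FS (x : nat -> bool) n := [set w : n.-tuple bool | `[< is_factor x w >] ].

Lemma inFS x n w : w \in FS x n -> exists i, w = fac x n i.
Proof.
rewrite inE => /asboolP [i hi]; exists i; apply: eq_from_tnth => p.
by rewrite hi tnth_mktuple.
Qed.

Lemma fac_in x n i : fac x n i \in FS x n.
Proof. by rewrite inE; apply/asboolP; exists i => p; rewrite tnth_mktuple. Qed.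

Lemma nth_fac x n i k b : k < n -> nth b (fac x n i) k = x (i + k).
Proof. by move=> hk; have := @nth_mktuple n bool (fun p : 'I_n => x (i + val p)) b (Ordinal hk). Qed.

Lemma fc_image (x y : nat -> bool) n m (A : finType)
  (g : A -> m.-tuple bool -> n.-tuple bool) :
  (forall i, exists a j, fac x n i = g a (fac y m j)) ->
  factor_complexity x n <= #|A| * factor_complexity y m.
Proof.
move=> H; rewrite /factor_complexity -/(FS x n) -/(FS y m).
pose S := [set g u.1 u.2 | u in setX [set: A] (FS y m)].
apply: (@leq_trans #|S|).
  apply: subset_leq_card; apply/subsetP => w /inFS [i ->].
  have [a [j ->]] := H i.
  apply/imsetP; exists (a, fac y m j) => //. rewrite !inE /=; by have := fac_in y m j; rewrite inE.
apply: leq_trans (leq_imset_card _ _) _; by rewrite cardsX cardsT.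
Qed.

Lemma fc_lower x n K :
  (forall i i', i < K -> i' < K -> fac x n i = fac x n i' -> i = i') ->
  K <= factor_complexity x n.
Proof.
move=> H; rewrite /factor_complexity -/(FS x n).
pose f := fun i : 'I_K => fac x n i.
have inj : injective f by move=> i i' /H h; apply: val_inj; apply: h.
rewrite -{1}(card_ord K) -cardsT -(card_imset _ inj).
apply: subset_leq_card; apply/subsetP => w /imsetP [i _ ->]; exact: fac_in.
Qed.
Lemma dsum_fuel_ok f1 f2 n : n <= f1 -> n <= f2 -> dsum32_fuel f1 n = dsum32_fuel f2 n.
Proof.
elim: f1 f2 n => [|f1 IH] [|f2] n /= h1 h2.
- by [].
- by move: h1; rewrite leqn0 => /eqP ->.
- by move: h2; rewrite leqn0 => /eqP ->.
- case: eqP => // /eqP nz; congr (_ + _); apply: IH; lia.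
Qed.

Lemma dsumE n : 0 < n -> dsum32 n = (n.*2 %% 3) + dsum32 (n.*2 %/ 3).
Proof.
move=> n0; rewrite /dsum32; case: n n0 => // n _ /=.
congr (_ + _); apply: dsum_fuel_ok; lia.
Qed.

Definition t := thue_morse32.

Lemma t3 m j : j < 3 -> t (3 * m + j) = t (2 * m + (j == 2)) (+) (j == 2).
Proof.
move=> hj; rewrite /t /thue_morse32.
case: (posnP (3 * m + j)) => [h|h].
  have -> : m = 0 by lia. have -> : j = 0 by lia. by [].
rewrite dsumE //.
have e1 : (3 * m + j).*2 %% 3 = (j.*2) %% 3 by lia.
have e2 : (3 * m + j).*2 %/ 3 = 2 * m + (j.*2 %/ 3) by lia.
rewrite e1 e2.
case: j hj {e1 e2 h} => [|[|[|]]] // _.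
- have -> : (0.*2 %% 3) = 0 by []. have -> : (0.*2 %/ 3) = 0 by [].
  by rewrite addbF.
- have -> : (1.*2 %% 3) = 2 by []. have -> : (1.*2 %/ 3) = 0 by [].
  by rewrite addbF oddD.
- have -> : (2.*2 %% 3) = 1 by []. have -> : (2.*2 %/ 3) = 1 by [].
  by rewrite oddD /= addbC.
Qed.

Lemma t_shift m x : t (3*m + x) = t (2*m + (2*x)%/3) (+) (x %% 3 == 2).
Proof.
have hx := divn_eq x 3; have hr : x %% 3 < 3 by rewrite ltn_pmod.
have -> : 3*m + x = 3*(m + x%/3) + x%%3 by lia.
rewrite t3 //.
move: hx hr; case: (x %% 3) => [|[|[|r]]] hx hr //=.
- by congr (t _ (+) _); lia.
- by congr (t _ (+) _); lia.
- by congr (t _ (+) _); lia.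
Qed.

Lemma t_back m y : t (2*m + y) = t (3*m + (3*(y%/2) + 2*(y%%2))) (+) odd y.
Proof.
rewrite t_shift.
have -> : (2 * (3 * (y %/ 2) + 2 * (y %% 2))) %/ 3 = y by lia.
have -> : ((3 * (y %/ 2) + 2 * (y %% 2)) %% 3 == 2) = odd y.
  have := modn2 y; case: (odd y) => h; apply/eqP; lia.
by rewrite -addbA addbb addbF.
Qed.
Definition Ttab : seq (nat * seq bool) := [::
(0,[::false;false;false;false;false;true;false;false;false;true]);
(0,[::false;false;false;false;false;true;false;false;true;false]);
(0,[::false;false;false;false;false;true;true;true;false;true]);
(0,[::false;false;false;false;false;true;true;true;true;false]);
(0,[::false;false;false;true;true;false;false;false;false;true]);
(0,[::false;false;false;true;true;false;false;false;true;false]);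
(0,[::false;false;false;true;true;false;false;false;true;true]);
(0,[::false;false;false;true;true;false;true;true;false;false]);
(0,[::false;false;false;true;true;false;true;true;true;false]);
(0,[::false;false;false;true;true;true;false;false;true;false]);
(0,[::false;false;false;true;true;true;false;false;true;true]);
(0,[::false;false;false;true;true;true;true;true;false;false]);
(0,[::false;false;false;true;true;true;true;true;false;true]);
(0,[::false;false;true;false;false;false;false;false;true;false]);
(0,[::false;false;true;false;false;false;false;false;true;true]);
(0,[::false;false;true;false;false;false;true;true;false;false]);
(0,[::false;false;true;false;false;false;true;true;false;true]);
(0,[::false;false;true;false;false;false;true;true;true;false]);
(0,[::false;false;true;false;false;false;true;true;true;true]);
(0,[::false;false;true;false;false;true;false;false;false;false]);
(0,[::false;false;true;false;false;true;false;false;false;true]);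
(0,[::false;false;true;false;false;true;true;true;false;false]);
(0,[::false;false;true;false;false;true;true;true;false;true]);
(0,[::false;false;true;false;false;true;true;true;true;false]);
(0,[::false;false;true;true;true;false;false;false;false;true]);
(0,[::false;false;true;true;true;false;false;false;true;false]);
(0,[::false;false;true;true;true;false;true;true;false;false]);
(0,[::false;false;true;true;true;false;true;true;false;true]);
(0,[::false;false;true;true;true;false;true;true;true;false]);
(0,[::false;false;true;true;true;false;true;true;true;true]);
(0,[::false;false;true;true;true;true;false;false;false;false]);
(0,[::false;false;true;true;true;true;false;false;false;true]);
(0,[::false;false;true;true;true;true;false;false;true;false]);
(0,[::false;false;true;true;true;true;false;false;true;true]);
(0,[::true;true;false;false;false;false;true;true;false;false]);
(0,[::true;true;false;false;false;false;true;true;false;true]);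
(0,[::true;true;false;false;false;false;true;true;true;false]);
(0,[::true;true;false;false;false;false;true;true;true;true]);
(0,[::true;true;false;false;false;true;false;false;false;false]);
(0,[::true;true;false;false;false;true;false;false;false;true]);
(0,[::true;true;false;false;false;true;false;false;true;false]);
(0,[::true;true;false;false;false;true;false;false;true;true]);
(0,[::true;true;false;false;false;true;true;true;false;true]);
(0,[::true;true;false;false;false;true;true;true;true;false]);
(0,[::true;true;false;true;true;false;false;false;false;true]);
(0,[::true;true;false;true;true;false;false;false;true;false]);
(0,[::true;true;false;true;true;false;false;false;true;true]);
(0,[::true;true;false;true;true;false;true;true;true;false]);
(0,[::true;true;false;true;true;false;true;true;true;true]);
(0,[::true;true;false;true;true;true;false;false;false;false]);
(0,[::true;true;false;true;true;true;false;false;false;true]);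
(0,[::true;true;false;true;true;true;false;false;true;false]);
(0,[::true;true;false;true;true;true;false;false;true;true]);
(0,[::true;true;false;true;true;true;true;true;false;false]);
(0,[::true;true;false;true;true;true;true;true;false;true]);
(0,[::true;true;true;false;false;false;false;false;true;false]);
(0,[::true;true;true;false;false;false;false;false;true;true]);
(0,[::true;true;true;false;false;false;true;true;false;false]);
(0,[::true;true;true;false;false;false;true;true;false;true]);
(0,[::true;true;true;false;false;true;false;false;false;true]);
(0,[::true;true;true;false;false;true;false;false;true;true]);
(0,[::true;true;true;false;false;true;true;true;false;false]);
(0,[::true;true;true;false;false;true;true;true;false;true]);
(0,[::true;true;true;false;false;true;true;true;true;false]);
(0,[::true;true;true;true;true;false;false;false;false;true]);
(0,[::true;true;true;true;true;false;false;false;true;false]);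
(0,[::true;true;true;true;true;false;true;true;false;true]);
(0,[::true;true;true;true;true;false;true;true;true;false]);
(1,[::false;false;false;false;true;false;false;false;true;true]);
(1,[::false;false;false;false;true;false;false;true;false;false]);
(1,[::false;false;false;false;true;true;true;false;true;true]);
(1,[::false;false;false;false;true;true;true;true;false;false]);
(1,[::false;false;true;true;false;false;false;false;true;true]);
(1,[::false;false;true;true;false;false;false;true;false;false]);
(1,[::false;false;true;true;false;false;false;true;true;true]);
(1,[::false;false;true;true;false;true;true;false;false;false]);
(1,[::false;false;true;true;false;true;true;true;false;false]);
(1,[::false;false;true;true;true;false;false;true;false;false]);
(1,[::false;false;true;true;true;false;false;true;true;true]);
(1,[::false;false;true;true;true;true;true;false;false;false]);
(1,[::false;false;true;true;true;true;true;false;true;true]);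
(1,[::false;true;false;false;false;false;false;true;false;false]);
(1,[::false;true;false;false;false;false;false;true;true;true]);
(1,[::false;true;false;false;false;true;true;false;false;false]);
(1,[::false;true;false;false;false;true;true;false;true;true]);
(1,[::false;true;false;false;false;true;true;true;false;false]);
(1,[::false;true;false;false;false;true;true;true;true;true]);
(1,[::false;true;false;false;true;false;false;false;false;false]);
(1,[::false;true;false;false;true;false;false;false;true;true]);
(1,[::false;true;false;false;true;true;true;false;false;false]);
(1,[::false;true;false;false;true;true;true;false;true;true]);
(1,[::false;true;false;false;true;true;true;true;false;false]);
(1,[::false;true;true;true;false;false;false;false;true;true]);
(1,[::false;true;true;true;false;false;false;true;false;false]);
(1,[::false;true;true;true;false;true;true;false;false;false]);
(1,[::false;true;true;true;false;true;true;false;true;true]);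
(1,[::false;true;true;true;false;true;true;true;false;false]);
(1,[::false;true;true;true;false;true;true;true;true;true]);
(1,[::false;true;true;true;true;false;false;false;false;false]);
(1,[::false;true;true;true;true;false;false;false;true;true]);
(1,[::false;true;true;true;true;false;false;true;false;false]);
(1,[::false;true;true;true;true;false;false;true;true;true]);
(1,[::true;false;false;false;false;true;true;false;false;false]);
(1,[::true;false;false;false;false;true;true;false;true;true]);
(1,[::true;false;false;false;false;true;true;true;false;false]);
(1,[::true;false;false;false;false;true;true;true;true;true]);
(1,[::true;false;false;false;true;false;false;false;false;false]);
(1,[::true;false;false;false;true;false;false;false;true;true]);
(1,[::true;false;false;false;true;false;false;true;false;false]);
(1,[::true;false;false;false;true;false;false;true;true;true]);
(1,[::true;false;false;false;true;true;true;false;true;true]);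
(1,[::true;false;false;false;true;true;true;true;false;false]);
(1,[::true;false;true;true;false;false;false;false;true;true]);
(1,[::true;false;true;true;false;false;false;true;false;false]);
(1,[::true;false;true;true;false;false;false;true;true;true]);
(1,[::true;false;true;true;false;true;true;true;false;false]);
(1,[::true;false;true;true;false;true;true;true;true;true]);
(1,[::true;false;true;true;true;false;false;false;false;false]);
(1,[::true;false;true;true;true;false;false;false;true;true]);
(1,[::true;false;true;true;true;false;false;true;false;false]);
(1,[::true;false;true;true;true;false;false;true;true;true]);
(1,[::true;false;true;true;true;true;true;false;false;false]);
(1,[::true;false;true;true;true;true;true;false;true;true]);
(1,[::true;true;false;false;false;false;false;true;false;false]);
(1,[::true;true;false;false;false;false;false;true;true;true]);
(1,[::true;true;false;false;false;true;true;false;false;false]);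
(1,[::true;true;false;false;false;true;true;false;true;true]);
(1,[::true;true;false;false;true;false;false;false;true;true]);
(1,[::true;true;false;false;true;false;false;true;true;true]);
(1,[::true;true;false;false;true;true;true;false;false;false]);
(1,[::true;true;false;false;true;true;true;false;true;true]);
(1,[::true;true;false;false;true;true;true;true;false;false]);
(1,[::true;true;true;true;false;false;false;false;true;true]);
(1,[::true;true;true;true;false;false;false;true;false;false]);
(1,[::true;true;true;true;false;true;true;false;true;true]);
(1,[::true;true;true;true;false;true;true;true;false;false]);
(2,[::false;false;false;false;true;true;false;false;false;true]);
(2,[::false;false;false;false;true;true;false;true;true;false]);
(2,[::false;false;false;false;true;true;true;false;false;true]);
(2,[::false;false;false;false;true;true;true;true;true;false]);
(2,[::false;false;false;true;false;false;false;false;false;true]);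
(2,[::false;false;false;true;false;false;false;true;true;false]);
(2,[::false;false;false;true;false;false;false;true;true;true]);
(2,[::false;false;false;true;false;false;true;false;false;false]);
(2,[::false;false;false;true;false;false;true;true;true;false]);
(2,[::false;false;false;true;true;true;false;true;true;false]);
(2,[::false;false;false;true;true;true;false;true;true;true]);
(2,[::false;false;false;true;true;true;true;false;false;false]);
(2,[::false;false;false;true;true;true;true;false;false;true]);
(2,[::false;true;true;false;false;false;false;true;true;false]);
(2,[::false;true;true;false;false;false;false;true;true;true]);
(2,[::false;true;true;false;false;false;true;false;false;false]);
(2,[::false;true;true;false;false;false;true;false;false;true]);
(2,[::false;true;true;false;false;false;true;true;true;false]);
(2,[::false;true;true;false;false;false;true;true;true;true]);
(2,[::false;true;true;false;true;true;false;false;false;false]);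
(2,[::false;true;true;false;true;true;false;false;false;true]);
(2,[::false;true;true;false;true;true;true;false;false;false]);
(2,[::false;true;true;false;true;true;true;false;false;true]);
(2,[::false;true;true;false;true;true;true;true;true;false]);
(2,[::false;true;true;true;false;false;false;false;false;true]);
(2,[::false;true;true;true;false;false;false;true;true;false]);
(2,[::false;true;true;true;false;false;true;false;false;false]);
(2,[::false;true;true;true;false;false;true;false;false;true]);
(2,[::false;true;true;true;false;false;true;true;true;false]);
(2,[::false;true;true;true;false;false;true;true;true;true]);
(2,[::false;true;true;true;true;true;false;false;false;false]);
(2,[::false;true;true;true;true;true;false;false;false;true]);
(2,[::false;true;true;true;true;true;false;true;true;false]);
(2,[::false;true;true;true;true;true;false;true;true;true]);
(2,[::true;false;false;false;false;false;true;false;false;false]);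
(2,[::true;false;false;false;false;false;true;false;false;true]);
(2,[::true;false;false;false;false;false;true;true;true;false]);
(2,[::true;false;false;false;false;false;true;true;true;true]);
(2,[::true;false;false;false;true;true;false;false;false;false]);
(2,[::true;false;false;false;true;true;false;false;false;true]);
(2,[::true;false;false;false;true;true;false;true;true;false]);
(2,[::true;false;false;false;true;true;false;true;true;true]);
(2,[::true;false;false;false;true;true;true;false;false;true]);
(2,[::true;false;false;false;true;true;true;true;true;false]);
(2,[::true;false;false;true;false;false;false;false;false;true]);
(2,[::true;false;false;true;false;false;false;true;true;false]);
(2,[::true;false;false;true;false;false;false;true;true;true]);
(2,[::true;false;false;true;false;false;true;true;true;false]);
(2,[::true;false;false;true;false;false;true;true;true;true]);
(2,[::true;false;false;true;true;true;false;false;false;false]);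
(2,[::true;false;false;true;true;true;false;false;false;true]);
(2,[::true;false;false;true;true;true;false;true;true;false]);
(2,[::true;false;false;true;true;true;false;true;true;true]);
(2,[::true;false;false;true;true;true;true;false;false;false]);
(2,[::true;false;false;true;true;true;true;false;false;true]);
(2,[::true;true;true;false;false;false;false;true;true;false]);
(2,[::true;true;true;false;false;false;false;true;true;true]);
(2,[::true;true;true;false;false;false;true;false;false;false]);
(2,[::true;true;true;false;false;false;true;false;false;true]);
(2,[::true;true;true;false;true;true;false;false;false;true]);
(2,[::true;true;true;false;true;true;false;true;true;true]);
(2,[::true;true;true;false;true;true;true;false;false;false]);
(2,[::true;true;true;false;true;true;true;false;false;true]);
(2,[::true;true;true;false;true;true;true;true;true;false]);
(2,[::true;true;true;true;false;false;false;false;false;true]);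
(2,[::true;true;true;true;false;false;false;true;true;false]);
(2,[::true;true;true;true;false;false;true;false;false;true]);
(2,[::true;true;true;true;false;false;true;true;true;false])].

Definition sq i := [seq t (i+k) | k <- iota 0 10].
Definition img (w : seq bool) j :=
  [seq nth false w ((2*(j+p))%/3) (+) ((j+p) %% 3 == 2) | p <- iota 0 10].

Lemma closure_ok : all (fun e => all (fun j => (j, img e.2 j) \in Ttab) (iota 0 3)) Ttab.
Proof. by vm_compute. Qed.

Lemma sync_ok : all (fun e1 => all (fun e2 => (e1.2 == e2.2) ==> (e1.1 == e2.1)) Ttab) Ttab.
Proof. by vm_compute. Qed.

Lemma nth_sq i k b : k < 10 -> nth b (sq i) k = t (i + k).
Proof. by move=> hk; rewrite (nth_map 0) ?size_iota // nth_iota. Qed.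

Lemma sq_tab i : (i %% 3, sq i) \in Ttab.
Proof.
elim/ltn_ind: i => i IH.
case: (posnP i) => [->|hi]; first by vm_compute.
set m := i %/ 3.
have h1 := IH (2*m) (ltac:(lia)).
have e : sq i = img (sq (2*m)) (i %% 3).
  apply/eq_in_map => p; rewrite mem_iota => /andP[_ hp].
  rewrite nth_sq; last by have := ltn_pmod i (isT : 0 < 3); lia.
  rewrite {1}(divn_eq i 3) mulnC -addnA t_shift //.
rewrite e.
have := allP closure_ok _ h1 => /allP; apply.
by rewrite mem_iota; have := ltn_pmod i (isT : 0 < 3); lia.
Qed.

Lemma phase i i' : (forall p, p < 10 -> t (i+p) = t (i'+p)) -> i %% 3 = i' %% 3.
Proof.
move=> H.
have e : sq i = sq i'.
  by apply/eq_in_map => p; rewrite mem_iota => /andP[_ hp]; apply: H.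
have h1 := sq_tab i; have h2 := sq_tab i'; rewrite e in h1.
have := allP (allP sync_ok _ h1) _ h2 => /= /implyP; rewrite eqxx => /(_ isT) /eqP.
by [].
Qed.

Fixpoint nk k := if k is k'.+1 then nk k' + nk k' %/ 2 + 2 else 10.

Lemma nk_ge k : 10 <= nk k.
Proof. elim: k => //= k IH; lia. Qed.

Lemma recog k i i' : (forall p, p < nk k -> t (i+p) = t (i'+p)) -> i = i' %[mod 3^k].
Proof.
elim: k i i' => [|k IH] i i' H; first by rewrite expn0 !modn1.
have n10 := nk_ge k.
have ph : i %% 3 = i' %% 3.
  apply: phase => p hp; apply: H => /=; lia.
set j := i %% 3.
have hj : j < 3 by rewrite ltn_pmod.
set m := i %/ 3; set m' := i' %/ 3.
have hi : i = 3*m + j by rewrite /m /j {1}(divn_eq i 3); lia.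
have hi' : i' = 3*m' + j by rewrite /m' /j ph {1}(divn_eq i' 3); lia.
set e := minn j 1.
have hh : forall d, d < nk k -> t (2*m + e + d) = t (2*m' + e + d).
  move=> d hd; rewrite -[2*m + e + d]addnA -[2*m' + e + d]addnA !t_back.
  set P := 3 * ((e + d) %/ 2) + 2 * ((e + d) %% 2).
  have hP : j <= P by rewrite /P /e; lia.
  have -> : 3*m + P = i + (P - j) by lia.
  have -> : 3*m' + P = i' + (P - j) by lia.
  rewrite H //= /P /e; lia.
have := IH _ _ hh.
move/eqP; rewrite eqn_modDr => /eqP /mod_half.
have o : odd (3^k) by rewrite oddX orbT.
move=> /(_ o) h3.
rewrite hi hi'; apply/eqP; rewrite eqn_modDr expnS; apply/eqP.
by rewrite -!muln_modr h3.
Qed.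

Lemma lower_t k n : nk k <= n -> 3^k <= factor_complexity t n.
Proof.
move=> hn; apply: fc_lower => i i' hi hi' hf.
have : i = i' %[mod 3^k].
  apply: recog => p hp.
  have hp' : p < n by lia.
  have := congr1 (fun w => tnth w (Ordinal hp')) hf.
  by rewrite !tnth_mktuple.
by rewrite !modn_small.
Qed.

Lemma fc_up n : factor_complexity t n <= 3 * factor_complexity t ((2*(n+1))%/3 + 1).
Proof.
have := @fc_image t t n ((2*(n+1))%/3 + 1) 'I_3
  (fun a w => [tuple nth false w ((2*(val a + val p))%/3) (+) ((val a + val p) %% 3 == 2) | p < n]).
rewrite card_ord; apply => i.
exists (Ordinal (ltn_pmod i (isT : 0 < 3))), (2 * (i %/ 3)).
apply: eq_from_tnth => p; rewrite !tnth_mktuple /=.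
rewrite nth_fac; last by have := ltn_ord p; have := ltn_pmod i (isT : 0 < 3); lia.
by rewrite {1}(divn_eq i 3) mulnC -addnA t_shift.
Qed.

Definition dt := diff_seq t.

Lemma fc_d_up n : factor_complexity dt n <= factor_complexity t n.+1.
Proof.
have := @fc_image dt t n n.+1 unit
  (fun _ w => [tuple nth false w (val p).+1 (+) nth false w (val p) | p < n]).
rewrite card_unit mul1n; apply => i; exists tt, i.
apply: eq_from_tnth => p; rewrite !tnth_mktuple /=.
have hp := ltn_ord p.
by rewrite !nth_fac // ?addnS // ltnW.
Qed.

Lemma fc_t_d n : factor_complexity t n <= 2 * factor_complexity dt n.
Proof.
have := @fc_image t dt n n bool
  (fun b w => [tuple foldl addb b (take (val p) w) | p < n]).
rewrite card_bool; apply => i; exists (t i), i.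
apply: eq_from_tnth => p; rewrite !tnth_mktuple /=.
suff HH : forall q, q <= n -> foldl addb (t i) (take q (fac dt n i)) = t (i + q).
  by rewrite HH // ltnW.
elim => [|q IHq] hq; first by rewrite take0 addn0.
rewrite (take_nth false); last by rewrite size_tuple.
rewrite foldl_rcons IHq; last exact: ltnW.
rewrite nth_fac; last exact: hq.
rewrite /dt /diff_seq addnS.
by case: (t (i+q)); case: (t (i+q).+1).
Qed.

Lemma fc_le n : factor_complexity t n <= 2 ^ n.
Proof.
rewrite /factor_complexity; apply: leq_trans (max_card _) _.
by rewrite card_tuple card_bool.
Qed.

Lemma upN k n : 2^k * (n - 5) <= 3^k -> factor_complexity t n <= 96 * 3^k.
Proof.
elim: k n => [|k IH] n H.
  rewrite expn0 muln1; case: (leqP n 5) => hn.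
    apply: leq_trans (fc_le n) _; apply: leq_trans (leq_pexp2l _ hn) _ => //.
  apply: leq_trans (fc_up n) _.
  have -> : (2 * (n + 1)) %/ 3 + 1 = 5 by move: H; rewrite expn0; lia.
  by apply: leq_trans (leq_mul (leqnn 3) (fc_le 5)) _.
case: (leqP n 5) => hn.
  apply: leq_trans (fc_le n) _; apply: leq_trans (leq_pexp2l _ hn) _ => //.
  have : 0 < 3^k.+1 by rewrite expn_gt0.
  have -> : 2^5 = 32 by []. lia.
apply: leq_trans (fc_up n) _.
rewrite expnS mulnCA leq_mul2l /=; apply: IH.
move: H; rewrite !expnS.
have A := expn_gt0 2 k.
set a := 2^k; set b := 3^k; set L := (2 * (n + 1)) %/ 3 + 1.
have hL : 3 * (L - 5) <= 2 * (n - 5) by rewrite /L; lia.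
move=> H.
have : 3 * (a * (L - 5)) <= 3 * b.
  apply: leq_trans H; rewrite mulnCA [2*a]mulnC -mulnA; exact: leq_mul (leqnn a) hL.
by rewrite leq_mul2l.
Qed.

Lemma nk_bound j : 2^j * (nk j + 4) <= 14 * 3^j.
Proof.
elim: j => [|j IH] /=; first by rewrite expn0 mul1n muln1.
rewrite !expnS.
have h : 2 * (nk j + nk j %/ 2 + 2 + 4) <= 3 * (nk j + 4) by lia.
apply: (@leq_trans (3 * (2^j * (nk j + 4)))).
  rewrite [2 * 2^j]mulnC -mulnA [3 * (_ * _)]mulnCA; exact: leq_mul (leqnn _) h.
rewrite [14 * (3 * _)]mulnCA; exact: leq_mul (leqnn 3) IH.
Qed.

Lemma nk_grow j : j < nk j.
Proof. elim: j => //= j IH; lia. Qed.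

Lemma fc_pos x n : 1 <= factor_complexity x n.
Proof. apply: fc_lower => i i'; lia. Qed.

Open Scope R_scope.

Definition rr := ln 3 / ln (3/2).

Lemma ln32_pos : 0 < ln (3/2).
Proof. rewrite -ln_1; apply: ln_increasing; lra. Qed.

Lemma rr_pos : 0 < rr.
Proof.
have h3 : 0 < ln 3 by rewrite -ln_1; apply: ln_increasing; lra.
have := ln32_pos => h; rewrite /rr /Rdiv.
apply: Rmult_lt_0_compat => //; exact: Rinv_0_lt_compat.
Qed.

Lemma Rp32 : Rpower (3/2) rr = 3.
Proof.
have := ln32_pos => h; rewrite /Rpower /rr.
replace (ln 3 / ln (3 / 2) * ln (3 / 2)) with (ln 3) by (field; lra).
rewrite exp_ln //; lra.
Qed.

Lemma Rp_pow k : Rpower ((3/2)^k) rr = 3^k.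
Proof.
rewrite -Rpower_pow; last lra.
by rewrite Rpower_mult Rmult_comm -Rpower_mult Rp32 Rpower_pow //; lra.
Qed.

Lemma INR_exp a k : INR (a ^ k)%N = INR a ^ k.
Proof.
elim: k => [|k IH]; first by rewrite expn0.
by rewrite expnS mult_INR IH /=.
Qed.

Lemma Rp_mono a b : 0 < a -> a <= b -> Rpower a rr <= Rpower b rr.
Proof. move=> ha hb; apply: Rle_Rpower_l; [have := rr_pos; lra | lra]. Qed.

Lemma INR_pos n : (1 <= n)%N -> 0 < INR n.
Proof. move=> h; apply: lt_0_INR; apply/ltP; exact: h. Qed.

Lemma Rp_ge1 n : (1 <= n)%N -> 1 <= Rpower (INR n) rr.
Proof.
move=> h.
have -> : 1 = Rpower 1 rr by rewrite /Rpower ln_1 Rmult_0_r exp_0.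
apply: Rp_mono; first lra.
have := le_INR 1 n; rewrite /= => H; apply: H; apply/leP; exact: h.
Qed.

Lemma lenR m n : (m <= n)%N -> INR m <= INR n.
Proof. move=> h; apply: le_INR; apply/leP; exact: h. Qed.

Lemma ltnR m n : (m < n)%N -> INR m < INR n.
Proof. move=> h; apply: lt_INR; apply/ltP; exact: h. Qed.

Lemma pow32 k : (3/2)^k * 2^k = 3^k.
Proof. by rewrite -Rpow_mult_distr; congr (_ ^ _); lra. Qed.

Lemma t_upper n : (1 <= n)%N -> INR (factor_complexity t n) <= 288 * Rpower (INR n) rr.
Proof.
move=> hn.
have ex : exists k, (2^k * (n - 5) <= 3^k)%N.
  exists (2 * n)%N.
  apply: (@leq_trans (2^(2*n) * 2^n)%N).
    exact: leq_mul (leqnn _) (leq_trans (leq_subr 5 n) (ltnW (ltn_expl n (isT : (1 < 2)%N)))).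
  rewrite -expnD.
  have -> : (2 * n + n = 3 * n)%N by lia.
  by rewrite !expnM leq_exp2r.
case: (ex_minnP ex) => k hk hmin.
have hp := @upN k n hk.
case: k hk hmin hp => [|k] hk hmin hp.
  apply: Rle_trans (lenR _ _ hp) _; rewrite muln1 /=.
  have := Rp_ge1 _ hn; lra.
have hlt : (3^k < 2^k * n)%N.
  case: (ltnP (3^k) (2^k * (n - 5))) => h.
    by apply: leq_trans h _; rewrite leq_mul2l leq_subr orbT.
  by have := hmin k h; lia.
apply: Rle_trans (lenR _ _ hp) _.
rewrite mult_INR INR_exp.
have h3 : INR 3 = 3 by rewrite /=; lra.
have h96 : INR 96 = 96 by rewrite /=; lra.
have e1 : INR 96 * INR 3 ^ k.+1 = 288 * 3 ^ k.
  by rewrite h3 h96 /=; lra.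
rewrite e1; apply: Rmult_le_compat_l; first lra.
rewrite -Rp_pow; apply: Rp_mono; first by apply: pow_lt; lra.
have := ltnR _ _ hlt; rewrite mult_INR !INR_exp h3 => h.
have h2' : INR 2 = 2 by rewrite /=; lra.
rewrite h2' in h.
have h2 : 0 < 2 ^ k by apply: pow_lt; lra.
have : (3/2)^k * 2^k < INR n * 2^k by rewrite pow32; lra.
move=> h4; left; exact: (Rmult_lt_reg_r _ _ _ h2 h4).
Qed.

Lemma Rp_posv x : 0 < Rpower x rr.
Proof. rewrite /Rpower; exact: exp_pos. Qed.

Lemma t_lower n : (1 <= n)%N ->
  / (3 * Rpower 14 rr) * Rpower (INR n) rr <= INR (factor_complexity t n).
Proof.
move=> hn.
have ex : exists k, (n < nk k.+1)%N by exists n; have := nk_grow n.+1; lia.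
case: (ex_minnP ex) => k hk hmin.
have hp : (3^k <= factor_complexity t n)%N.
  case: k hk hmin => [|k] hk hmin; first by rewrite expn0 fc_pos.
  apply: lower_t; case: (leqP (nk k.+1) n) => // h.
  by have := hmin k h; lia.
have hb := nk_bound k.+1.
have h3 : INR 3 = 3 by rewrite /=; lra.
have h2 : INR 2 = 2 by rewrite /=; lra.
have h14 : INR 14 = 14 by rewrite /=; lra.
have h4 : INR 4 = 4 by rewrite /=; lra.
have R1 := lenR _ _ hb; rewrite !mult_INR !INR_exp plus_INR h3 h2 h14 h4 in R1.
have R2 := ltnR _ _ hk.
have R3 := lenR _ _ hp; rewrite INR_exp h3 in R3.
set N := INR (nk k.+1) in R1 R2.
have p2 : 0 < 2 ^ k.+1 by apply: pow_lt; lra.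
have p32 : 0 < (3/2) ^ k.+1 by apply: pow_lt; lra.
have hN : N <= 14 * (3/2)^k.+1.
  apply: (Rmult_le_reg_r (2 ^ k.+1)) => //.
  rewrite Rmult_assoc pow32; nra.
have hnpos : 0 < INR n by apply: INR_pos.
have P := Rp_posv 14.
have key : Rpower (INR n) rr <= (3 * Rpower 14 rr) * INR (factor_complexity t n).
  apply: Rle_trans (Rp_mono _ _ hnpos (_ : INR n <= 14 * (3/2)^k.+1)) _; first lra.
  rewrite -Rpower_mult_distr; [|lra|lra].
  rewrite Rp_pow /=.
  have : 0 <= 3 ^ k by apply: pow_le; lra.
  nra.
apply: (Rmult_le_reg_l (3 * Rpower 14 rr)); first lra.
rewrite -Rmult_assoc Rinv_r; lra.
Qed.

Lemma d_upper n : (1 <= n)%N ->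
  INR (factor_complexity dt n) <= 288 * Rpower 2 rr * Rpower (INR n) rr.
Proof.
move=> hn.
have h1 := lenR _ _ (fc_d_up n).
have h2 := t_upper n.+1 isT.
have hnpos : 0 < INR n by apply: INR_pos.
have h3 : Rpower (INR n.+1) rr <= Rpower 2 rr * Rpower (INR n) rr.
  rewrite Rpower_mult_distr; [|lra|lra].
  apply: Rp_mono; first by rewrite S_INR; lra.
  rewrite S_INR; have := lenR _ _ hn; rewrite /=; lra.
have := Rp_posv (INR n.+1); lra.
Qed.

Lemma d_lower n : (1 <= n)%N ->
  / 2 * / (3 * Rpower 14 rr) * Rpower (INR n) rr <= INR (factor_complexity dt n).
Proof.
move=> hn.
have h1 := lenR _ _ (fc_t_d n); rewrite mult_INR in h1.
have h2 := t_lower n hn.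
have e : INR 2 = 2 by rewrite /=; lra.
rewrite e in h1; lra.
Qed.

Theorem corollary16 :
  Theta_pow (factor_complexity thue_morse32) (ln 3 / ln (3 / 2))%R /\
  Theta_pow (factor_complexity (diff_seq thue_morse32)) (ln 3 / ln (3 / 2))%R.
Proof.
have P := Rp_posv 14.
have P2 := Rp_posv 2.
split.
- exists (/ (3 * Rpower 14 rr)), 288; split; first by apply: Rinv_0_lt_compat; lra.
  split; first lra.
  move=> n hn; split; [exact: t_lower n hn | exact: t_upper n hn].
- exists (/ 2 * / (3 * Rpower 14 rr)), (288 * Rpower 2 rr).
  split.
    apply: Rmult_lt_0_compat; apply: Rinv_0_lt_compat; lra.
  split; first lra.
  move=> n hn; split; [exact: d_lower n hn | exact: d_upper n hn].
Qed.
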